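(* Let $J$ be a $\times d$-invariant set satisfying conditions (i) and (ii) below, let $\delta$ be its Hausdorff dimension and $\mu=\mathcal{H}^\delta|_J/\mathcal{H}^\delta(J)$. Then for $\mu$-almost every $x\in J$, every rational number in $J_x=\{t-x:t\in J\}$ is of the form $p/d^n$ with $p\in\mathbb{Z}$ and $n\in\mathbb{N}\cup\{0\}$. Conditions: (i) $d$ is prime; (ii) $E$ contains both $0$ and $d-1$, and $E$ contains no two integers differing by $1$.
   Context: Fix an integer $d\ge2$ and $E\subseteq\{0,\dots,d-1\}$ with $1<\#E<d$. The $\times d$-invariant set is $J=\{x\in[0,1]: x=\sum_{i\ge1}a_id^{-i}\text{ with all }a_i\in E\}$. Under $\mu$ the base-$d$ digits of a random point are i.i.d. uniform on $E$. *)

(* Defs.v *)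
From Stdlib Require Import Reals Lra Lia ZArith Arith List Znumtheory.
Import ListNotations.
Open Scope R_scope.

(* x = sum_{i>=1} a_i d^{-i}, digits indexed from 0: a i is the (i+1)-th digit. *)
Definition digit_val (d : nat) (a : nat -> nat) (x : R) : Prop :=
  Un_cv (fun n => sum_f_R0 (fun i => INR (a i) / INR d ^ (S i)) n) x.

Definition digits_in (E : list nat) (a : nat -> nat) : Prop :=
  forall i, In (a i) E.

Definition inJ (d : nat) (E : list nat) (x : R) : Prop :=
  exists a, digits_in E a /\ digit_val d a x.

Definition is_rational (r : R) : Prop :=
  exists p q : Z, q <> 0%Z /\ r = IZR p / IZR q.

Definition has_prefix (w : list nat) (a : nat -> nat) : Prop :=
  forall i, (i < length w)%nat -> nth i w 0%nat = a i.

(* A set B of digit sequences is null for the product measure under which the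
   digits are i.i.d. uniform on E: for every eps > 0 it can be covered by
   countably many cylinders [w] (each of mass (#E)^(-|w|)) of total mass <= eps. *)
Definition digit_null (E : list nat) (B : (nat -> nat) -> Prop) : Prop :=
  forall eps, eps > 0 ->
    exists W : nat -> list nat,
      (forall n, sum_f_R0 (fun k => / INR (length E) ^ length (W k)) n <= eps) /\
      (forall a, digits_in E a -> B a -> exists k, has_prefix (W k) a).

(* mu-almost every x in J satisfies P, where mu is the law of a point of J whose
   base-d digits are i.i.d. uniform on E. *)
Definition mu_ae (d : nat) (E : list nat) (P : R -> Prop) : Prop :=
  digit_null E (fun a => exists x, digit_val d a x /\ ~ P x).

(* Main.v *)
Require Import Defs.
From Stdlib Require Import Reals Lra Lia ZArith Arith List Znumtheory Classical ClassicalEpsilon FunctionalExtensionality Cantor.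
Import ListNotations.
Open Scope R_scope.

Definition lsum (l : list R) : R := fold_right Rplus 0 l.

Lemma lsum_app l1 l2 : lsum (l1 ++ l2) = lsum l1 + lsum l2.
Proof. induction l1; simpl; [lra|rewrite IHl1; lra]. Qed.

Lemma lsum_nonneg {A} (f : A -> R) l : (forall x, In x l -> 0 <= f x) -> 0 <= lsum (map f l).
Proof. induction l; simpl; intros H; [lra|].
  assert (0 <= f a) by (apply H; auto). assert (0 <= lsum (map f l)) by (apply IHl; auto). lra. Qed.

Lemma sum_nth_le {A} (f : A -> R) (l : list A) dflt n :
  (forall x, In x l -> 0 <= f x) -> (n < length l)%nat ->
  sum_f_R0 (fun k => f (nth k l dflt)) n <= lsum (map f l).
Proof.
  revert n; induction l as [|x l IH]; intros n Hf Hn; simpl in *; [lia|].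
  destruct n as [|n].
  - simpl. assert (0 <= lsum (map f l)) by (apply lsum_nonneg; auto). lra.
  - rewrite decomp_sum by lia. simpl.
    assert (sum_f_R0 (fun i => f (nth i l dflt)) n <= lsum (map f l)) by (apply IH; auto; lia).
    lra.
Qed.

Lemma lsum_concat {A} (f : A -> R) (L : list (list A)) :
  lsum (map f (concat L)) = lsum (map (fun l => lsum (map f l)) L).
Proof. induction L; simpl; auto. rewrite map_app, lsum_app, IHL. reflexivity. Qed.

Definition mass (e : nat) (w : list nat) : R := / INR e ^ length w.

Lemma mass_pos e w : (1 <= e)%nat -> 0 <= mass e w.
Proof. intros. unfold mass. apply Rlt_le, Rinv_0_lt_compat, pow_lt. apply lt_0_INR; lia. Qed.

Definition CC (Cf : nat -> list (list nat)) (M : nat) := concat (map Cf (seq 0 M)).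

Lemma CC_len Cf M : (forall N, Cf N <> []) -> (M <= length (CC Cf M))%nat.
Proof.
  intros H. induction M; simpl; [lia|]. unfold CC in *. rewrite seq_S, map_app, concat_app, length_app.
  simpl. rewrite app_nil_r. destruct (Cf M) eqn:E; [exfalso; apply (H M); auto|]. simpl. lia.
Qed.

Lemma CC_pref Cf M M' k : (M <= M')%nat -> (k < length (CC Cf M))%nat ->
  nth k (CC Cf M) [] = nth k (CC Cf M') [].
Proof.
  intros HM Hk. unfold CC in *. replace M' with (M + (M' - M))%nat by lia.
  rewrite seq_app, map_app, concat_app, app_nth1; auto.
Qed.

Lemma geo_sum (g : nat -> R) eps M : (forall N, g N <= eps / 2 ^ (S N)) ->
  lsum (map g (seq 0 M)) <= eps - eps / 2 ^ M.
Proof.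
  intros H. induction M.
  - simpl. lra.
  - rewrite seq_S, map_app, lsum_app. simpl. specialize (H M). simpl in H.
    assert (0 < 2 ^ M) by (apply pow_lt; lra).
    assert (eps / (2 * 2 ^ M) = eps / 2 ^ M / 2) by (field; lra). lra.
Qed.

Lemma union_null (E : list nat) (B : (nat -> nat) -> Prop) (BN : nat -> (nat -> nat) -> Prop) :
  (1 <= length E)%nat ->
  (forall a, digits_in E a -> B a -> exists N, BN N a) ->
  (forall N eps, eps > 0 -> exists C : list (list nat), C <> [] /\
      lsum (map (mass (length E)) C) <= eps /\
      forall a, digits_in E a -> BN N a -> exists w, In w C /\ has_prefix w a) ->
  digit_null E B.
Proof.
  intros HE HB HC eps Heps.
  assert (Hc : forall N, exists C : list (list nat), C <> [] /\
      lsum (map (mass (length E)) C) <= eps / 2 ^ (S N) /\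
      forall a, digits_in E a -> BN N a -> exists w, In w C /\ has_prefix w a).
  { intros N. apply HC. apply Rdiv_lt_0_compat; [lra|apply pow_lt; lra]. }
  set (Cf := fun N => proj1_sig (constructive_indefinite_description _ (Hc N))).
  assert (HCf : forall N, Cf N <> [] /\ lsum (map (mass (length E)) (Cf N)) <= eps / 2 ^ (S N) /\
      forall a, digits_in E a -> BN N a -> exists w, In w (Cf N) /\ has_prefix w a).
  { intros N. unfold Cf. destruct (constructive_indefinite_description _ (Hc N)). simpl. auto. }
  assert (Hne : forall N, Cf N <> []) by (intros; apply HCf).
  exists (fun k => nth k (CC Cf (S k)) []). split.
  - intros n. 
    assert (Heq : forall k, (k <= n)%nat -> nth k (CC Cf (S k)) [] = nth k (CC Cf (S n)) []).
    { intros k Hk. apply CC_pref; [lia|]. pose proof (CC_len Cf (S k) Hne). lia. }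
    rewrite (sum_eq _ (fun k => mass (length E) (nth k (CC Cf (S n)) []))).
    2:{ intros k Hk. unfold mass. rewrite Heq; auto. }
    eapply Rle_trans. apply sum_nth_le. intros; apply mass_pos; auto.
    pose proof (CC_len Cf (S n) Hne). lia.
    unfold CC. rewrite lsum_concat, map_map.
    eapply Rle_trans. apply geo_sum with (g := fun N => lsum (map (mass (length E)) (Cf N))).
    intros N; apply HCf.
    assert (0 < eps / 2 ^ S n) by (apply Rdiv_lt_0_compat; [lra|apply pow_lt; lra]). lra.
  - intros a Ha HBa. destruct (HB a Ha HBa) as [N HN].
    destruct (proj2 (proj2 (HCf N)) a Ha HN) as [w [Hw Hp]].
    assert (Hin : In w (CC Cf (S N))).
    { unfold CC. apply in_concat. exists (Cf N). split; auto. apply in_map. apply in_seq. lia. }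
    destruct (In_nth _ _ [] Hin) as [k [Hk Hkw]].
    exists k. replace (nth k (CC Cf (S k)) []) with w; auto.
    destruct (Nat.le_gt_cases k N).
    + rewrite <- Hkw. symmetry. apply CC_pref; [lia|]. pose proof (CC_len Cf (S k) Hne). lia.
    + rewrite <- Hkw. apply CC_pref; [lia|auto].
Qed.

Definition seg (a : nat -> nat) i n := map a (seq i n).

Fixpoint words (E : list nat) (n : nat) : list (list nat) :=
  match n with O => [[]] | S n => flat_map (fun e => map (cons e) (words E n)) E end.

Lemma fm_len (W : list (list nat)) (X : list nat) :
  length (flat_map (fun e => map (cons e) W) X) = (length X * length W)%nat.
Proof. induction X; simpl; auto. rewrite length_app, length_map, IHX. lia. Qed.

Lemma words_len E n : length (words E n) = (length E ^ n)%nat.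
Proof.
  induction n; simpl; auto. rewrite fm_len, IHn. lia.
Qed.

Lemma words_in E n v : length v = n -> (forall z, In z v -> In z E) -> In v (words E n).
Proof.
  revert v; induction n; intros v Hl Hz; destruct v as [|x v]; simpl in *; try lia; auto.
  apply in_flat_map. exists x. split; auto. apply in_map. apply IHn; auto.
Qed.

Lemma words_len_in E n v : In v (words E n) -> length v = n.
Proof.
  revert v; induction n; intros v H; simpl in *.
  - destruct H as [<-|[]]; auto.
  - apply in_flat_map in H. destruct H as [e [_ H]]. apply in_map_iff in H.
    destruct H as [u [<- H]]. simpl. f_equal. auto.
Qed.

Lemma filter_lt {A} (f : A -> bool) l x : In x l -> f x = false -> (S (length (filter f l)) <= length l)%nat.
Proof.
  induction l as [|y l IH]; simpl; intros H Hf; [destruct H|].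
  destruct H as [<-|H].
  - rewrite Hf. pose proof (filter_length_le f l). lia.
  - specialize (IH H Hf). destruct (f y); simpl; lia.
Qed.

Lemma len_prod {A B C} (g : A -> B -> C) (X : list A) (Y : list B) :
  length (concat (map (fun u => map (g u) Y) X)) = (length X * length Y)%nat.
Proof. induction X; simpl; auto. rewrite length_app, length_map, IHX. lia. Qed.

Lemma lsum_const_len e (l : list (list nat)) M :
  (forall u, In u l -> length u = M) -> lsum (map (mass e) l) = INR (length l) * / INR e ^ M.
Proof.
  induction l as [|u l IH]; intros H.
  - simpl. ring.
  - cbn [map]. unfold lsum at 1; cbn [fold_right]. fold (lsum (map (mass e) l)).
    rewrite IH by (intros; apply H; simpl; auto). unfold mass. rewrite (H u) by (simpl; auto).
    cbn [length]. rewrite S_INR. ring.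
Qed.

Section Cov.
Variable E : list nat.
Variable l : nat.
Variable wf : nat -> list nat.
Definition allowed j := filter (fun v => if list_eq_dec Nat.eq_dec v (wf j) then false else true) (words E l).
Fixpoint cov K := match K with O => [[]] | S K =>
  concat (map (fun u => map (fun v => u ++ v) (allowed K)) (cov K)) end.

Lemma cov_elem K u : In u (cov K) -> length u = (K * l)%nat.
Proof.
  revert u; induction K; intros u H; simpl in *. destruct H as [<-|[]]; auto.
  apply in_concat in H. destruct H as [x [Hx Hu]]. apply in_map_iff in Hx. destruct Hx as [u0 [<- Hu0]].
  apply in_map_iff in Hu. destruct Hu as [v [<- Hv]]. rewrite length_app, (IHK _ Hu0).
  unfold allowed in Hv. apply filter_In in Hv. rewrite (words_len_in _ _ _ (proj1 Hv)). lia.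
Qed.

Hypothesis hwf : forall j, length (wf j) = l /\ forall z, In z (wf j) -> In z E.

Lemma allowed_len j : (S (length (allowed j)) <= length E ^ l)%nat.
Proof.
  rewrite <- words_len. unfold allowed. apply filter_lt with (x := wf j).
  apply words_in; apply hwf. destruct (list_eq_dec Nat.eq_dec (wf j) (wf j)); congruence.
Qed.

Lemma cov_len K : (length (cov K) <= (length E ^ l - 1) ^ K)%nat.
Proof.
  induction K; simpl; auto. rewrite len_prod. pose proof (allowed_len K).
  rewrite Nat.mul_comm. apply Nat.mul_le_mono; lia.
Qed.

Variables z1 z2 : nat.
Hypothesis hz : In z1 E /\ In z2 E /\ z1 <> z2.
Hypothesis hl : (1 <= l)%nat.

Lemma allowed_ne j : allowed j <> [].
Proof.
  destruct hz as [h1 [h2 h12]].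
  assert (Hr : forall z, In z E -> In (repeat z l) (words E l)).
  { intros z Hz. apply words_in. apply repeat_length. intros y Hy. apply repeat_spec in Hy. subst; auto. }
  assert (Hd : repeat z1 l <> repeat z2 l).
  { intros H. destruct l; [lia|]. simpl in H. congruence. }
  unfold allowed. destruct (list_eq_dec Nat.eq_dec (repeat z1 l) (wf j)).
  - intros H. assert (Hi : In (repeat z2 l) (filter (fun v => if list_eq_dec Nat.eq_dec v (wf j) then false else true) (words E l))).
    { apply filter_In. split; auto. destruct (list_eq_dec Nat.eq_dec (repeat z2 l) (wf j)); [congruence|reflexivity]. }
    rewrite H in Hi. destruct Hi.
  - intros H. assert (Hi : In (repeat z1 l) (filter (fun v => if list_eq_dec Nat.eq_dec v (wf j) then false else true) (words E l))).
    { apply filter_In. split; auto. destruct (list_eq_dec Nat.eq_dec (repeat z1 l) (wf j)); [congruence|reflexivity]. }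
    rewrite H in Hi. destruct Hi.
Qed.

Lemma cov_ne K : exists u, In u (cov K).
Proof.
  induction K; [simpl; eauto|]. cbn [cov]. destruct IHK as [u Hu].
  destruct (allowed K) as [|v vs] eqn:Ha. exfalso; apply (allowed_ne K); auto.
  exists (u ++ v). apply in_concat. eexists. split. apply in_map_iff. eexists; split; [reflexivity|eauto].
  simpl; auto.
Qed.

Lemma cov_covers a K : digits_in E a -> (forall j, seg a (j * l) l <> wf j) -> In (seg a 0 (K * l)) (cov K).
Proof.
  intros Ha Hw. induction K; simpl. left; auto.
  replace (l + K * l)%nat with (K * l + l)%nat by lia. unfold seg. rewrite seq_app, map_app.
  apply in_concat. eexists. split. apply in_map_iff. eexists; split; [reflexivity|exact IHK].
  apply in_map. unfold allowed. apply filter_In. split.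
  - apply words_in. rewrite length_map, length_seq; auto. intros z Hz. apply in_map_iff in Hz.
    destruct Hz as [i [<- _]]. apply Ha.
  - destruct (list_eq_dec Nat.eq_dec (map a (seq (0 + K * l) l)) (wf K)); auto. exfalso. apply (Hw K). exact e.
Qed.

End Cov.

Lemma seg_prefix a M : has_prefix (seg a 0 M) a.
Proof.
  intros i Hi. unfold seg in *. rewrite length_map, length_seq in Hi.
  rewrite nth_indep with (d' := a 0%nat) by (rewrite length_map, length_seq; auto).
  rewrite map_nth, seq_nth; auto.
Qed.

Lemma block_cover (E : list nat) l (wf : nat -> list nat) z1 z2 (B : (nat -> nat) -> Prop) :
  In z1 E -> In z2 E -> z1 <> z2 -> (1 <= l)%nat ->
  (forall j, length (wf j) = l /\ forall z, In z (wf j) -> In z E) ->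
  (forall a, digits_in E a -> B a -> forall j, seg a (j * l) l <> wf j) ->
  forall eps, eps > 0 -> exists C : list (list nat), C <> [] /\
      lsum (map (mass (length E)) C) <= eps /\
      forall a, digits_in E a -> B a -> exists w, In w C /\ has_prefix w a.
Proof.
  intros h1 h2 h12 hl hwf HB eps Heps.
  set (e := length E).
  assert (He : (2 <= e)%nat).
  { destruct E as [|x [|y E']]; [destruct h1|..]; simpl in *.
    - destruct h1 as [<-|[]]; destruct h2 as [<-|[]]; congruence.
    - unfold e; simpl; lia. }
  set (A := INR (e ^ l)).
  assert (HA : 2 <= A). { unfold A. replace 2 with (INR 2) by (simpl; lra). apply le_INR.
    destruct l; [lia|]. simpl. pose proof (Nat.pow_le_mono_r e 0 l ltac:(lia) ltac:(lia)). simpl in H. nia. }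
  assert (Hx : Rabs ((A - 1) / A) < 1).
  { rewrite Rabs_right. apply Rmult_lt_reg_r with A; [lra|]. field_simplify; lra.
    apply Rle_ge. unfold Rdiv. apply Rmult_le_pos; [lra|]. apply Rlt_le, Rinv_0_lt_compat; lra. }
  destruct (pow_lt_1_zero _ Hx eps Heps) as [K HK]. specialize (HK K (le_n _)).
  exists (cov E l wf K). split; [|split].
  - destruct (cov_ne E l wf hwf z1 z2 (conj h1 (conj h2 h12)) hl K) as [u Hu]. intros H; rewrite H in Hu; destruct Hu.
  - rewrite lsum_const_len with (M := (K * l)%nat) by apply cov_elem.
    eapply Rle_trans; [|apply Rlt_le; apply Rle_lt_trans with (2 := HK); apply Rle_abs].
    assert (Hc : INR (length (cov E l wf K)) <= (A - 1) ^ K).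
    { pose proof (cov_len E l wf hwf K) as H. apply le_INR in H. rewrite pow_INR, minus_INR in H.
      unfold A. simpl in H. exact H. pose proof (Nat.pow_le_mono_r e 0 l ltac:(lia) ltac:(lia)). simpl in H0. unfold e in *. lia. }
    replace ((A - 1) / A) with ((A - 1) * / A) by reflexivity. rewrite Rpow_mult_distr, pow_inv.
    replace (INR e ^ (K * l)) with (A ^ K).
    2:{ unfold A. rewrite pow_INR, <- pow_mult. f_equal. lia. }
    apply Rmult_le_compat_r; auto. apply Rlt_le, Rinv_0_lt_compat, pow_lt; lra.
  - intros a Ha HBa. exists (seg a 0 (K * l)). split. 2: apply seg_prefix.
    apply (cov_covers E l wf z1 z2 (conj h1 (conj h2 h12)) hl a K Ha). apply HB; auto.
Qed.

Fixpoint tailv (d : nat) (a : nat -> nat) (x : R) (n : nat) : R :=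
  match n with O => x | S n => INR d * tailv d a x n - INR (a n) end.

Lemma shift_sum d a n : (1 <= d)%nat ->
  sum_f_R0 (fun i => INR (a (S i)) / INR d ^ S i) n =
  INR d * sum_f_R0 (fun i => INR (a i) / INR d ^ S i) (S n) - INR (a O).
Proof.
  intros Hd. assert (Hd' : INR d <> 0) by (apply not_0_INR; lia).
  induction n.
  - simpl. field. auto.
  - rewrite (tech5 _ (S n)), tech5, IHn. simpl. field. split; auto. apply pow_nonzero; auto.
Qed.

Lemma shift_val d a x : (1 <= d)%nat -> digit_val d a x ->
  digit_val d (fun i => a (S i)) (INR d * x - INR (a O)).
Proof.
  intros Hd H eps Heps. assert (Hd' : 0 < INR d) by (apply lt_0_INR; lia).
  destruct (H (eps / INR d)) as [N HN]. apply Rdiv_lt_0_compat; lra.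
  exists N. intros n Hn. unfold R_dist. rewrite shift_sum by auto.
  specialize (HN (S n) ltac:(lia)). unfold R_dist in HN.
  replace (INR d * sum_f_R0 (fun i => INR (a i) / INR d ^ S i) (S n) - INR (a 0%nat) - (INR d * x - INR (a 0%nat)))
    with (INR d * (sum_f_R0 (fun i => INR (a i) / INR d ^ S i) (S n) - x)) by ring.
  rewrite Rabs_mult, Rabs_right by lra.
  apply Rmult_lt_reg_r with (/ INR d). apply Rinv_0_lt_compat; lra.
  replace (INR d * Rabs (sum_f_R0 (fun i => INR (a i) / INR d ^ S i) (S n) - x) * / INR d)
    with (Rabs (sum_f_R0 (fun i => INR (a i) / INR d ^ S i) (S n) - x)) by (field; lra).
  exact HN.
Qed.

Lemma tl_val d a x n : (1 <= d)%nat -> digit_val d a x -> digit_val d (fun i => a (n + i)%nat) (tailv d a x n).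
Proof.
  intros Hd H. induction n.
  - simpl. exact H.
  - simpl. apply shift_val with (a := fun i => a (n + i)%nat) in IHn; auto.
    replace (fun i => a (S (n + i))) with (fun i => a (n + S i)%nat).
    replace (a n) with (a (n + 0)%nat) by (f_equal; lia). exact IHn.
    apply functional_extensionality; intros; f_equal; lia.
Qed.

Lemma cv_bounds u l lo hi : Un_cv u l -> (forall n, lo <= u n <= hi) -> lo <= l <= hi.
Proof.
  intros H Hb. split.
  - destruct (Rle_lt_dec lo l); auto. destruct (H (lo - l)) as [N HN]; [lra|].
    specialize (HN N (le_n _)). specialize (Hb N). unfold R_dist in HN.
    apply Rabs_def2 in HN. lra.
  - destruct (Rle_lt_dec l hi); auto. destruct (H (l - hi)) as [N HN]; [lra|].
    specialize (HN N (le_n _)). specialize (Hb N). unfold R_dist in HN.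
    apply Rabs_def2 in HN. lra.
Qed.

Lemma val_bounds d a x : (2 <= d)%nat -> (forall i, (a i < d)%nat) -> digit_val d a x -> 0 <= x <= 1.
Proof.
  intros Hd Ha H. apply (cv_bounds _ _ _ _ H).
  assert (Hd' : 2 <= INR d) by (replace 2 with (INR 2) by (simpl; lra); apply le_INR; auto).
  assert (Hai : forall i, 0 <= INR (a i) <= INR d - 1).
  { intros i. split. apply pos_INR. specialize (Ha i).
    assert (Hh : INR (a i) <= INR (d-1)) by (apply le_INR; lia). rewrite minus_INR in Hh by lia. simpl in Hh. lra. }
  assert (forall n, 0 <= sum_f_R0 (fun i => INR (a i) / INR d ^ S i) n <= 1 - / INR d ^ S n).
  { induction n.
    - simpl. specialize (Hai 0%nat). rewrite Rmult_1_r. split.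
      apply Rmult_le_pos; [lra|]. apply Rlt_le, Rinv_0_lt_compat; lra.
      apply Rmult_le_reg_r with (INR d); [lra|]. field_simplify; lra.
    - simpl. specialize (Hai (S n)). assert (0 < INR d ^ n) by (apply pow_lt; lra).
      assert (0 < INR d * INR d ^ n) by (apply Rmult_lt_0_compat; lra).
      assert (0 < INR d * (INR d * INR d ^ n)) by (apply Rmult_lt_0_compat; lra).
      simpl in IHn. split.
      + assert (0 <= INR (a (S n)) / (INR d * (INR d * INR d ^ n))).
        { apply Rmult_le_pos; [lra|]. apply Rlt_le, Rinv_0_lt_compat; lra. }
        lra.
      + assert (INR (a (S n)) / (INR d * (INR d * INR d ^ n)) <= (INR d - 1) / (INR d * (INR d * INR d ^ n))).
        { apply Rmult_le_compat_r; [apply Rlt_le, Rinv_0_lt_compat; lra|lra]. }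
        assert ((INR d - 1) / (INR d * (INR d * INR d ^ n)) = / (INR d * INR d ^ n) - / (INR d * (INR d * INR d ^ n))) by (field; lra).
        lra. }
  intros n. specialize (H0 n). split; [lra|]. assert (0 < / INR d ^ S n) by (apply Rinv_0_lt_compat, pow_lt; lra). lra.
Qed.

Fixpoint Kz (d : nat) (a b : nat -> nat) (n : nat) : Z :=
  match n with O => 0%Z | S n => (Z.of_nat d * Kz d a b n + (Z.of_nat (b n) - Z.of_nat (a n)))%Z end.

Section Tails.
Variables (d : nat) (E : list nat).
Hypothesis hd : (2 <= d)%nat.
Hypothesis hE : forall e, In e E -> (e < d)%nat.
Variables (p q : Z).
Hypothesis hq : (0 < q)%Z.
Variables (a b : nat -> nat) (x t : R).
Hypothesis Ha : digits_in E a.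
Hypothesis Hb : digits_in E b.
Hypothesis Hx : digit_val d a x.
Hypothesis Ht : digit_val d b t.
Hypothesis Hr : t - x = IZR p / IZR q.
Hypothesis Hbad : forall p' n, t - x <> IZR p' / INR d ^ n.

Definition Rt n := tailv d b t n - tailv d a x n.

Lemma dpos : 2 <= INR d.
Proof. replace 2 with (INR 2) by (simpl; lra); apply le_INR; auto. Qed.

Lemma Rt_S n : Rt (S n) = INR d * Rt n - (INR (b n) - INR (a n)).
Proof. unfold Rt; simpl; ring. Qed.

Lemma Rt_K n : Rt n = INR d ^ n * (t - x) - IZR (Kz d a b n).
Proof.
  induction n.
  - unfold Rt; simpl; ring.
  - rewrite Rt_S, IHn. simpl Kz. rewrite plus_IZR, mult_IZR, minus_IZR, <- !INR_IZR_INZ. simpl. ring.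
Qed.

Lemma Rt_bound n : -1 <= Rt n <= 1.
Proof.
  assert (Hd1 : (1 <= d)%nat) by lia.
  pose proof (val_bounds d _ _ hd (fun i => hE _ (Ha (n + i)%nat)) (tl_val d a x n Hd1 Hx)) as H1.
  pose proof (val_bounds d _ _ hd (fun i => hE _ (Hb (n + i)%nat)) (tl_val d b t n Hd1 Ht)) as H2.
  unfold Rt. lra.
Qed.

Lemma Rt_nonint n m : Rt n <> IZR m.
Proof.
  intros H. rewrite Rt_K in H. apply (Hbad (m + Kz d a b n)%Z n).
  rewrite plus_IZR, <- H. field. apply pow_nonzero. pose proof dpos. lra.
Qed.

Lemma Rt_qint n : exists z, IZR q * Rt n = IZR z.
Proof.
  exists (p * Z.of_nat d ^ Z.of_nat n - q * Kz d a b n)%Z.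
  rewrite Rt_K, Hr, minus_IZR, !mult_IZR, <- pow_IZR, <- INR_IZR_INZ.
  field. apply not_0_IZR. lia.
Qed.

Lemma qpos : 0 < IZR q.
Proof. apply IZR_lt. auto. Qed.

Lemma Rt_pos_lb n : 0 < Rt n -> / IZR q <= Rt n.
Proof.
  intros H. destruct (Rt_qint n) as [z Hz]. pose proof qpos.
  assert (0 < IZR z) by (rewrite <- Hz; apply Rmult_lt_0_compat; lra).
  apply lt_IZR in H1. assert (1 <= IZR z) by (apply IZR_le; lia).
  apply Rmult_le_reg_l with (IZR q); auto. rewrite Rinv_r by lra. lra.
Qed.

Lemma Rt_neg_ub n : Rt n < 0 -> Rt n <= - / IZR q.
Proof.
  intros H. destruct (Rt_qint n) as [z Hz]. pose proof qpos.
  assert (IZR z < 0).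
  { rewrite <- Hz. assert (0 < IZR q * - Rt n) by (apply Rmult_lt_0_compat; lra). lra. }
  apply lt_IZR in H1. assert (IZR z <= -1) by (apply IZR_le in H1 || (apply IZR_le; lia); lra).
  apply Rmult_le_reg_l with (IZR q); auto. 
  replace (IZR q * - / IZR q) with (-1) by (field; lra). lra.
Qed.

Variable L : nat.
Hypothesis hL : IZR q <= INR d ^ L.

Lemma block_top j : (forall k, (k < L)%nat -> a (j + k)%nat = (d - 1)%nat) -> Rt j < 0.
Proof.
  intros Hk. pose proof dpos.
  destruct (Rtotal_order (Rt j) 0) as [Hlt|[Heq|Hgt]]; auto.
  - exfalso. apply (Rt_nonint j 0). auto.
  - exfalso.
    assert (Hind : forall k, (k <= L)%nat -> INR d ^ k * Rt j <= Rt (j + k)%nat).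
    { induction k; intros Hk'.
      - rewrite Nat.add_0_r. simpl. lra.
      - rewrite Nat.add_succ_r, Rt_S, Hk by lia. specialize (IHk ltac:(lia)).
        assert (Hbb : INR (b (j + k)%nat) <= INR (d - 1)) by (apply le_INR; pose proof (hE _ (Hb (j+k)%nat)); lia).
        rewrite minus_INR in * by lia. simpl in *. nra. }
    specialize (Hind L (le_n _)). pose proof (Rt_pos_lb j Hgt). pose proof qpos.
    assert (IZR q * / IZR q <= INR d ^ L * Rt j).
    { apply Rmult_le_compat; try lra. apply Rlt_le, Rinv_0_lt_compat; lra. }
    rewrite Rinv_r in H2 by lra. pose proof (Rt_bound (j + L)).
    apply (Rt_nonint (j + L) 1). lra.
Qed.

Lemma block_bot j : (forall k, (k < L)%nat -> a (j + k)%nat = 0%nat) -> 0 < Rt j.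
Proof.
  intros Hk. pose proof dpos.
  destruct (Rtotal_order (Rt j) 0) as [Hlt|[Heq|Hgt]]; auto.
  - exfalso.
    assert (Hind : forall k, (k <= L)%nat -> Rt (j + k)%nat <= INR d ^ k * Rt j).
    { induction k; intros Hk'.
      - rewrite Nat.add_0_r. simpl. lra.
      - rewrite Nat.add_succ_r, Rt_S, Hk by lia. specialize (IHk ltac:(lia)).
        assert (Hbb : 0 <= INR (b (j + k)%nat)) by apply pos_INR.
        simpl in *. nra. }
    specialize (Hind L (le_n _)). pose proof (Rt_neg_ub j Hlt). pose proof qpos.
    assert (IZR q * / IZR q <= INR d ^ L * - Rt j).
    { apply Rmult_le_compat; try lra. apply Rlt_le, Rinv_0_lt_compat; lra. }
    rewrite Rinv_r in H2 by lra. pose proof (Rt_bound (j + L)).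
    apply (Rt_nonint (j + L) (-1)). lra.
  - exfalso. apply (Rt_nonint j 0). auto.
Qed.

End Tails.

Lemma residue (d : nat) (E : list nat) :
  (2 <= d)%nat -> prime (Z.of_nat d) -> (forall e, In e E -> (e < d)%nat) -> NoDup E ->
  (length E < d)%nat -> In 0%nat E ->
  forall c, ~ (Z.of_nat d | c)%Z ->
  exists al, In al E /\ forall be, In be E -> ~ (Z.of_nat d | Z.of_nat be - Z.of_nat al - c)%Z.
Proof.
  intros hd hp hE hnd hlen h0 c hc.
  apply NNPP. intros Hn.
  assert (H : forall al, In al E -> exists be, In be E /\ (Z.of_nat d | Z.of_nat be - Z.of_nat al - c)%Z).
  { intros al Hal. apply NNPP. intros H1. apply Hn. exists al. split; auto.
    intros be Hbe Hd. apply H1. eauto. }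
  assert (Hk : forall k : nat, exists be, In be E /\ (Z.of_nat d | Z.of_nat be - Z.of_nat k * c)%Z).
  { induction k.
    - exists 0%nat. split; auto. exists 0%Z. lia.
    - destruct IHk as [be [Hbe Hd]]. destruct (H be Hbe) as [be' [Hbe' Hd']].
      exists be'. split; auto. destruct Hd as [z1 Hz1]. destruct Hd' as [z2 Hz2].
      exists (z1 + z2)%Z. lia. }
  assert (Hrp : rel_prime (Z.of_nat d) c) by (apply prime_rel_prime; auto).
  destruct (rel_prime_bezout _ _ Hrp) as [u v Huv].
  assert (Hall : forall y, (y < d)%nat -> In y E).
  { intros y Hy.
    assert (HD : (0 < (Z.of_nat d))%Z) by lia.
    set (m := ((Z.of_nat y * v) mod (Z.of_nat d))%Z).
    assert (Hm : (0 <= m < (Z.of_nat d))%Z) by (apply Z.mod_pos_bound; auto).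
    destruct (Hk (Z.to_nat m)) as [be [Hbe Hd]].
    rewrite Z2Nat.id in Hd by lia.
    assert (Hmq : m = (Z.of_nat y * v - (Z.of_nat d) * (Z.of_nat y * v / (Z.of_nat d)))%Z) by (unfold m; apply Z.mod_eq; lia).
    assert (Hdiv : ((Z.of_nat d) | Z.of_nat be - Z.of_nat y)%Z).
    { destruct Hd as [z Hz]. exists (z - Z.of_nat y * u - (Z.of_nat y * v / (Z.of_nat d)) * c)%Z.
      rewrite Hmq in Hz.
      assert (Hy1 : (Z.of_nat y = Z.of_nat y * (u * (Z.of_nat d) + v * c))%Z) by (rewrite Huv; ring).
      rewrite Hy1 at 1. 
      replace (Z.of_nat be - Z.of_nat y * (u * (Z.of_nat d) + v * c))%Z with
        ((Z.of_nat be - (Z.of_nat y * v - (Z.of_nat d) * (Z.of_nat y * v / (Z.of_nat d))) * c) - Z.of_nat y * u * (Z.of_nat d) - (Z.of_nat y * v / (Z.of_nat d)) * c * (Z.of_nat d))%Z by ring.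
      rewrite Hz. ring. }
    destruct Hdiv as [z Hz]. pose proof (hE _ Hbe).
    assert (z = 0%Z) by nia. subst z. assert (be = y) by lia. subst; auto. }
  assert (Hincl : incl (seq 0 d) E).
  { intros y Hy. apply in_seq in Hy. apply Hall. lia. }
  pose proof (NoDup_incl_length (seq_NoDup d 0) Hincl). rewrite length_seq in H0. lia.
Qed.

Definition Bad d E p q (a : nat -> nat) : Prop :=
  exists b x t, digits_in E b /\ digit_val d a x /\ digit_val d b t /\ t - x = IZR p / IZR q /\
    forall p' n, t - x <> IZR p' / INR d ^ n.

Lemma seg_nth a i n k : (k < n)%nat -> nth k (seg a i n) 0%nat = a (i + k)%nat.
Proof.
  intros H. unfold seg. rewrite nth_indep with (d' := a 0%nat) by (rewrite length_map, length_seq; auto).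
  rewrite map_nth, seq_nth; auto.
Qed.

Lemma int_between (K u : Z) y : y < IZR K < y + 1 -> y < IZR u <= y + 1 -> K = u.
Proof.
  intros H1 H2. assert (-1 < IZR (K - u) < 1) by (rewrite minus_IZR; lra).
  destruct H. apply lt_IZR in H. apply lt_IZR in H0. lia.
Qed.

Lemma kill d E p q L :
  (2 <= d)%nat -> (forall e, In e E -> (e < d)%nat) -> NoDup E -> (length E < d)%nat ->
  prime (Z.of_nat d) -> In 0%nat E -> In (d - 1)%nat E -> (0 < q)%Z ->
  IZR q <= INR d ^ L ->
  forall i, exists w, length w = S L /\ (forall z, In z w -> In z E) /\
    forall a, digits_in E a -> Bad d E p q a -> seg a i (S L) <> w.
Proof.
  intros hd hE hnd hlen hp h0 hd1 hq hL i.
  set (y := INR d ^ S i * (IZR p / IZR q)).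
  set (u := up y). destruct (archimed y) as [Hu1 Hu2]. fold u in Hu1, Hu2.
  assert (Hgen : forall (c : Z) (e : nat), ~ (Z.of_nat d | c)%Z -> In e E ->
     (forall a b x t, digits_in E a -> digits_in E b -> digit_val d a x -> digit_val d b t ->
        t - x = IZR p / IZR q -> (forall p' n, t - x <> IZR p' / INR d ^ n) ->
        (forall k, (k < L)%nat -> a (S i + k)%nat = e) -> Kz d a b (S i) = c) ->
     exists w, length w = S L /\ (forall z, In z w -> In z E) /\
       forall a, digits_in E a -> Bad d E p q a -> seg a i (S L) <> w).
  { intros c e Hc He HK.
    destruct (residue d E hd hp hE hnd hlen h0 c Hc) as [al [Hal Hres]].
    exists (al :: repeat e L). split; [simpl; rewrite repeat_length; auto|split].
    - intros z [<-|Hz]; auto. apply repeat_spec in Hz; subst; auto.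
    - intros a Ha [b [x [t [Hb [Hx [Ht [Hr Hbad]]]]]]] Hseg.
      assert (Hai : a i = al).
      { pose proof (seg_nth a i (S L) 0 ltac:(lia)). rewrite Hseg, Nat.add_0_r in H. simpl in H. auto. }
      assert (Hak : forall k, (k < L)%nat -> a (S i + k)%nat = e).
      { intros k Hk. pose proof (seg_nth a i (S L) (S k) ltac:(lia)). rewrite Hseg in H. simpl in H.
        rewrite nth_repeat_lt in H by auto. rewrite H. f_equal; lia. }
      specialize (HK a b x t Ha Hb Hx Ht Hr Hbad Hak).
      simpl in HK. apply (Hres (b i) (Hb i)). rewrite <- HK, Hai.
      exists (- Kz d a b i)%Z. ring. }
  destruct (classic (Z.of_nat d | u)%Z) as [Hdu|Hdu].
  - apply (Hgen (u - 1)%Z 0%nat).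
    + intros H. assert (Z.of_nat d | 1)%Z.
      { replace 1%Z with (u - (u - 1))%Z by ring. apply Z.divide_sub_r; auto. }
      apply Z.divide_pos_le in H0; lia.
    + auto.
    + intros a b x t Ha Hb Hx Ht Hr Hbad Hak.
      pose proof (block_bot d E hd hE p q hq a b x t Ha Hb Hx Ht Hr Hbad L hL (S i) Hak) as Hpos.
      pose proof (Rt_bound d E hd hE a b x t Ha Hb Hx Ht (S i)) as Hbd.
      assert (Rt d a b x t (S i) <> 1) by (apply (Rt_nonint d hd a b x t Hbad (S i) 1)).
      rewrite Rt_K in Hpos, Hbd, H. rewrite Hr in Hpos, Hbd, H. fold y in Hpos, Hbd, H.
      apply int_between with (y := y - 1). lra. rewrite minus_IZR. lra.
  - apply (Hgen u (d - 1)%nat); auto.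
    intros a b x t Ha Hb Hx Ht Hr Hbad Hak.
    pose proof (block_top d E hd hE p q hq a b x t Ha Hb Hx Ht Hr Hbad L hL (S i) Hak) as Hneg.
    pose proof (Rt_bound d E hd hE a b x t Ha Hb Hx Ht (S i)) as Hbd.
    assert (Rt d a b x t (S i) <> -1) by (apply (Rt_nonint d hd a b x t Hbad (S i) (-1))).
    rewrite Rt_K in Hneg, Hbd, H. rewrite Hr in Hneg, Hbd, H. fold y in Hneg, Hbd, H.
    apply int_between with (y := y). lra. lra.
Qed.

Lemma bad_cover d E p q :
  (2 <= d)%nat -> (forall e, In e E -> (e < d)%nat) -> NoDup E -> (length E < d)%nat ->
  prime (Z.of_nat d) -> In 0%nat E -> In (d - 1)%nat E -> (0 < q)%Z ->
  forall eps, eps > 0 -> exists C : list (list nat), C <> [] /\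
      lsum (map (mass (length E)) C) <= eps /\
      forall a, digits_in E a -> Bad d E p q a -> exists w, In w C /\ has_prefix w a.
Proof.
  intros hd hE hnd hlen hp h0 hd1 hq.
  set (L := Z.to_nat q).
  assert (hL : IZR q <= INR d ^ L).
  { rewrite <- pow_INR. replace (IZR q) with (INR L) by (unfold L; rewrite INR_IZR_INZ, Z2Nat.id; [reflexivity|lia]).
    apply le_INR. apply Nat.lt_le_incl, Nat.pow_gt_lin_r. lia. }
  pose proof (kill d E p q L hd hE hnd hlen hp h0 hd1 hq hL) as HK.
  set (wf := fun i => proj1_sig (constructive_indefinite_description _ (HK i))).
  assert (Hwf : forall i, length (wf i) = S L /\ (forall z, In z (wf i) -> In z E) /\
    forall a, digits_in E a -> Bad d E p q a -> seg a i (S L) <> wf i).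
  { intros i. unfold wf. destruct (constructive_indefinite_description _ (HK i)). simpl. auto. }
  apply (block_cover E (S L) (fun j => wf (j * S L)%nat) 0%nat (d - 1)%nat (Bad d E p q)); auto.
  - lia.
  - lia.
  - intros j. split; apply Hwf.
  - intros a Ha HB j. apply Hwf; auto.
Qed.

Definition qN (N : nat) : Z := Z.of_nat (S (fst (of_nat N))).
Definition pN (N : nat) : Z := (Z.of_nat (fst (of_nat (snd (of_nat N)))) - Z.of_nat (snd (of_nat (snd (of_nat N)))))%Z.

Lemma dec_surj p q : (0 < q)%Z -> exists N, pN N = p /\ qN N = q.
Proof.
  intros hq.
  set (jk := if Z_le_dec 0 p then (Z.to_nat p, 0%nat) else (0%nat, Z.to_nat (- p))).
  exists (to_nat (Nat.pred (Z.to_nat q), to_nat jk)). unfold pN, qN. rewrite !cancel_of_to. simpl. rewrite cancel_of_to.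
  split.
  - unfold jk. destruct (Z_le_dec 0 p); simpl; lia.
  - lia.
Qed.

Theorem theorem3p5 (d : nat) (E : list nat)
  (hd : (2 <= d)%nat)
  (hE : forall e, In e E -> (e < d)%nat)
  (hnd : NoDup E)
  (hcard : (1 < length E < d)%nat)
  (hprime : prime (Z.of_nat d))
  (h0 : In 0%nat E) (hd1 : In (d - 1)%nat E)
  (hgap : forall a b, In a E -> In b E -> a <> S b) :
  mu_ae d E (fun x =>
    forall t, inJ d E t -> is_rational (t - x) ->
      exists (p : Z) (n : nat), t - x = IZR p / INR d ^ n).
Proof.
  unfold mu_ae.
  apply union_null with (BN := fun N => Bad d E (pN N) (qN N)).
  - lia.
  - intros a Ha [x [Hx HP]].
    apply not_all_ex_not in HP. destruct HP as [t Ht].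
    apply imply_to_and in Ht. destruct Ht as [[b [Hb Htv]] Ht].
    apply imply_to_and in Ht. destruct Ht as [[p0 [q0 [Hq0 Hr]]] Hn].
    assert (Hbad : forall p' n, t - x <> IZR p' / INR d ^ n).
    { intros p' n H. apply Hn. eauto. }
    assert (Hpq : exists p q, (0 < q)%Z /\ t - x = IZR p / IZR q).
    { destruct (Z_lt_le_dec 0 q0).
      - exists p0, q0. auto.
      - exists (- p0)%Z, (- q0)%Z. split. lia. rewrite Hr, !opp_IZR. field.
        apply not_0_IZR; auto. }
    destruct Hpq as [p [q [hq Hr']]].
    destruct (dec_surj p q hq) as [N [HpN HqN]].
    exists N. rewrite HpN, HqN. exists b, x, t. repeat split; auto.
  - intros N. apply bad_cover; auto. lia. unfold qN. lia.
Qed.
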